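(* Let $G=\mathrm{Aut}(\mathbf{K})$ for a Fraïssé structure $\mathbf{K}$ with exhaustion $\bigcup_n\mathbf{A}_n$, and fix a minimal subflow $M\subseteq S(G)$. The following are equivalent: (1) retractions of $S(G)$ onto $M$ separate points of $S(G)$, i.e. for all $\alpha\neq\gamma$ in $S(G)$ there is a retraction $\phi:S(G)\to M$ with $\phi(\alpha)\neq\phi(\gamma)$; (2) for every $m<\omega$, $B'_m=\mathcal{P}(H_m)$.
   Context: $\mathbf{K}$ is a countably infinite ultrahomogeneous relational structure; $\mathbf{A}_1\subseteq\mathbf{A}_2\subseteq\cdots$ finite substructures, $|\mathbf{A}_n|=n$, union $\mathbf{K}$; $H_n=\mathrm{Emb}(\mathbf{A}_n,\mathbf{K})$. $S(G)$ is the inverse limit of the spaces $\beta H_n$ of ultrafilters along the continuous extensions of restriction maps $H_n\to H_m$, with right $G$-action: $S\in(\alpha g)(m)$ iff $\{x\in H_n:x\circ g|_{\mathbf{A}_m}\in S\}\in\alpha(n)$ (for $n$ with $g(\mathbf{A}_m)\subseteq\mathbf{A}_n$). A minimal subflow is a nonempty closed $G$-invariant set with no proper such subset; a retraction onto $M$ is a continuous $G$-equivariant $\phi:S(G)\to M$ with $\phi|_M=\mathrm{id}$. Identify subsets of $H_n$ with $2^{H_n}$, right action $(\chi\cdot g)(f)=\chi(g\circ f)$; $S\subseteq H_n$ is minimal if $\overline{\chi_S\cdot G}$ is a minimal $G$-flow. $B_n$ is the Boolean algebra generated by the minimal subsets of $H_n$; for $T\subseteq H_m$ and $n\geq m$,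 $i^n_m(T)=\{s\in H_n:s|_{\mathbf{A}_m}\in T\}$; $B'_m=\{T\subseteq H_m:\exists n\geq m\ (i^n_m(T)\in B_n)\}$. *)

(* Defs.v *)
From HB Require Import structures.
From mathcomp Require Import all_boot all_order.
From mathcomp Require Import all_classical.

Set Implicit Arguments.
Unset Strict Implicit.
Unset Printing Implicit Defensive.

Local Open Scope classical_set_scope.
Local Open Scope card_scope.

Record relstruct := RelStruct {
  carrier : Type;
  symbol : Type;
  arity : symbol -> nat;
  rel : forall l : symbol, ('I_(arity l) -> carrier) -> Prop }.

Section Defs.
Variable K : relstruct.
Local Notation T := (carrier K).

Definition is_aut (g : T -> T) : Prop :=
  bijective g /\
  forall (l : symbol K) (t : 'I_(arity l) -> T), rel t <-> rel (g \o t).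

(* ultrahomogeneity: every isomorphism between finite substructures
   (= partial embedding with finite domain D) extends to an automorphism *)
Definition ultrahomogeneous : Prop :=
  forall (D : set T) (p : T -> T), finite_set D ->
    (forall x y, D x -> D y -> p x = p y -> x = y) ->
    (forall (l : symbol K) (t : 'I_(arity l) -> T),
        (forall i, D (t i)) -> (rel t <-> rel (p \o t))) ->
    exists g, is_aut g /\ forall x, D x -> g x = p x.

Variable A : nat -> set T.

Definition exhaustion : Prop :=
  (forall n, A n #= `I_n) /\
  (forall m n, (m <= n)%N -> A m `<=` A n) /\
  \bigcup_n A n = setT.

Definition is_emb (n : nat) (f : {a : T | A n a} -> T) : Prop :=
  injective f /\
  forall (l : symbol K) (t : 'I_(arity l) -> {a : T | A n a}),
    rel (fun i => proj1_sig (t i)) <-> rel (fun i => f (t i)).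

Definition H (n : nat) := {f : {a : T | A n a} -> T | is_emb f}.

Definition restr (m n : nat) (x : H n) (y : H m) : Prop :=
  forall a (ha : A m a) (hb : A n a),
    proj1_sig y (exist _ a ha) = proj1_sig x (exist _ a hb).

Definition compg (m n : nat) (g : T -> T) (x : H n) (y : H m) : Prop :=
  forall a (ha : A m a) (hb : A n (g a)),
    proj1_sig y (exist _ a ha) = proj1_sig x (exist _ (g a) hb).

Definition ultra (X : Type) (U : set (set X)) : Prop :=
  U setT /\ ~ U set0 /\
  (forall P Q, U P -> P `<=` Q -> U Q) /\
  (forall P Q, U P -> U Q -> U (P `&` Q)) /\
  (forall P, U P \/ U (~` P)).

(* families (α(n))_n of set systems; S(G) is the inverse limit of the βH_n *)
Definition Sraw := forall n : nat, set (set (H n)).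

Definition SG : set Sraw :=
  [set alpha | (forall n, ultra (alpha n)) /\
    forall m n, (m <= n)%N -> forall S : set (H m),
      alpha m S <-> alpha n [set x | exists y, S y /\ restr x y]].

(* right action: S ∈ (α g)(m) iff {x ∈ H_n : x ∘ g|_{A_m} ∈ S} ∈ α(n),
   for n with g(A_m) ⊆ A_n *)
Definition act (alpha : Sraw) (g : T -> T) : Sraw :=
  fun m S => exists n, g @` A m `<=` A n /\
    alpha n [set x | exists y, S y /\ compg g x y].

(* topology of S(G) (inverse limit of Stone spaces): basic open sets
   {α : S ∈ α(n)} *)
Definition isopen (O : set Sraw) : Prop :=
  O `<=` SG /\
  forall alpha, O alpha -> exists n (S : set (H n)),
    alpha n S /\ forall beta, SG beta -> beta n S -> O beta.

Definition isclosed (C : set Sraw) : Prop := C `<=` SG /\ isopen (SG `\` C).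

Definition invariant (N : set Sraw) : Prop :=
  forall alpha g, N alpha -> is_aut g -> N (act alpha g).

Definition minimal_subflow (M : set Sraw) : Prop :=
  M `<=` SG /\ M !=set0 /\ isclosed M /\ invariant M /\
  forall N, N `<=` M -> N !=set0 -> isclosed N -> invariant N -> N = M.

(* continuous G-equivariant φ : S(G) -> M with φ|_M = id *)
Definition retraction (M : set Sraw) (phi : Sraw -> Sraw) : Prop :=
  (forall alpha, SG alpha -> M (phi alpha)) /\
  (forall n (S : set (H n)), isopen [set alpha | SG alpha /\ phi alpha n S]) /\
  (forall alpha g, SG alpha -> is_aut g -> phi (act alpha g) = act (phi alpha) g) /\
  (forall alpha, M alpha -> phi alpha = alpha).

(* subsets of H_n as points of 2^{H_n}; (χ·g)(f) = χ(g ∘ f) *)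
Definition act2 (n : nat) (X : set (H n)) (g : T -> T) : set (H n) :=
  [set f | exists f' : H n, X f' /\
     forall a (ha : A n a),
       proj1_sig f' (exist _ a ha) = g (proj1_sig f (exist _ a ha))].

Definition agree (n : nat) (F X Y : set (H n)) : Prop :=
  forall f, F f -> (X f <-> Y f).

(* product topology on 2^{H_n} *)
Definition closedH (n : nat) (Z : set (set (H n))) : Prop :=
  forall X, (forall F, finite_set F -> exists Y, Z Y /\ agree F X Y) -> Z X.

Definition invariantH (n : nat) (Z : set (set (H n))) : Prop :=
  forall X g, Z X -> is_aut g -> Z (act2 X g).

Definition orbit_closure (n : nat) (S : set (H n)) : set (set (H n)) :=
  [set X | forall F, finite_set F -> exists g, is_aut g /\ agree F X (act2 S g)].

Definition minimal_flowH (n : nat) (Y : set (set (H n))) : Prop :=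
  Y !=set0 /\ closedH Y /\ invariantH Y /\
  forall Z, Z `<=` Y -> Z !=set0 -> closedH Z -> invariantH Z -> Z = Y.

Definition minimal_subset (n : nat) (S : set (H n)) : Prop :=
  minimal_flowH (orbit_closure S).

Definition Bgen (n : nat) : set (set (H n)) :=
  [set P | forall F : set (set (H n)),
     (forall S, minimal_subset S -> F S) -> F set0 ->
     (forall Q, F Q -> F (~` Q)) ->
     (forall Q R, F Q -> F R -> F (Q `|` R)) -> F P].

Definition incl (m n : nat) (P : set (H m)) : set (H n) :=
  [set s | exists y, P y /\ restr s y].

Definition Bprime (m : nat) : set (set (H m)) :=
  [set P | exists n, (m <= n)%N /\ @Bgen n (@incl m n P)].

End Defs.

(* Main.v *)
Require Import Defs.
From HB Require Import structures.
From mathcomp Require Import all_boot all_order.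
From mathcomp Require Import all_classical.
Local Open Scope classical_set_scope.
Set Implicit Arguments.
Unset Strict Implicit.
Unset Printing Implicit Defensive.

Lemma finite_ind (X : Type) (P : set X -> Prop) :
  P set0 -> (forall B x, finite_set B -> P B -> P (x |` B)) ->
  forall B, finite_set B -> P B.
Proof.
move=> P0 PS; elim/Peq: X => X in P P0 PS *.
move=> B /finite_seqP [s ->]; elim: s => [|x s IH].
  suff -> : [set` [::]] = (set0 : set X) by [].
  by apply/seteqP; split => y //=.
suff -> : [set` (x :: s)] = x |` [set` s].
  by apply: PS => //; apply: finite_seq.
apply/seteqP; split => y /=; rewrite inE.
  by case/orP => [/eqP ->|ys]; [left|right].
by case => [->|ys]; apply/orP; [left|right].
Qed.

Lemma finite_preim_Some (I : Type) (F : set (option I)) :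
  finite_set F -> finite_set [set i | F (Some i)].
Proof.
move: F; apply: finite_ind.
  by apply: (sub_finite_set (B := set0)) => //.
move=> B [x|] _ fB.
  apply: (sub_finite_set (B := [set x] `|` [set i | B (Some i)])).
    by move=> i /= [[->]|]; [left|right].
  by rewrite finite_setU; split => //; apply: finite_set1.
by apply: (sub_finite_set (B := [set i | B (Some i)])) => // i /= [].
Qed.

Section Main.
Variable K : relstruct.
Variable A : nat -> set (carrier K).
Hypothesis exA : exhaustion A.
Hypothesis uhK : ultrahomogeneous K.
Local Notation T := (carrier K).
Local Notation Hn := (@H K A).

Definition pemb (D : set T) (u : T -> T) :=
  (forall x y, D x -> D y -> u x = u y -> x = y) /\
  (forall (l : symbol K) (t : 'I_(arity l) -> T),
     (forall i, D (t i)) -> (Defs.rel t <-> Defs.rel (u \o t))).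

Definition maps m n (u : T -> T) := forall a, A m a -> A n (u a).

Lemma Amono m n : (m <= n)%N -> forall t, A m t -> A n t.
Proof. by case: exA => _ [h _] mn t; apply: h. Qed.

Lemma Afin n : finite_set (A n).
Proof. by case: exA => h _; exists n; apply: h. Qed.

Lemma Acover t : exists n, A n t.
Proof.
case: exA => _ [_ h].
have : [set: T] t by [].
by rewrite -h => -[n _ hn]; exists n.
Qed.

Lemma fin_in_A {D : set T} : finite_set D -> exists n, D `<=` A n.
Proof.
move: D; apply: finite_ind; first by exists 0%N.
move=> B x _ [n hn]; have [k hk] := Acover x.
exists (maxn n k) => y [->|By].
  exact: (Amono (leq_maxr n k) hk).
exact: (Amono (leq_maxl n k) (hn _ By)).
Qed.

Lemma image_in_A m (u : T -> T) : exists n, maps m n u.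
Proof.
have [n hn] := fin_in_A (finite_image u (Afin m)).
by exists n => a ha; apply: hn; exists a.
Qed.

Definition ext n (x : Hn n) : T -> T := fun t =>
  match pselect (A n t) with
  | left h => proj1_sig x (exist _ t h)
  | right _ => t end.

Lemma extE n (x : Hn n) a (h : A n a) : ext x a = proj1_sig x (exist _ a h).
Proof. by rewrite /ext; case: pselect => [h'|//]; rewrite (Prop_irrelevance h' h). Qed.

Lemma Heq n (x y : Hn n) : (forall a, A n a -> ext x a = ext y a) -> x = y.
Proof.
move=> E; case: x E => [f fP]; case: y => [g gP] E; apply: eq_exist.
apply: funext => -[a ha]; have := E a ha.
by rewrite (extE (exist _ f fP) ha) (extE (exist _ g gP) ha).
Qed.

Lemma ext_pemb n (x : Hn n) : pemb (A n) (ext x).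
Proof.
case: x => [f [finj frel]]; split.
  move=> a b ha hb; rewrite (extE _ ha) (extE _ hb) /= => /finj.
  by move=> /(congr1 (@proj1_sig _ _)).
move=> l t ht; have := frel l (fun i => exist _ (t i) (ht i)); rewrite /=.
suff -> : (ext (exist _ f (conj finj frel)) \o t) = (fun i => f (exist _ (t i) (ht i))) by [].
by apply: funext => i /=; rewrite (extE _ (ht i)).
Qed.

Lemma pemb_is_emb n u : pemb (A n) u -> is_emb (fun a : {a | A n a} => u (proj1_sig a)).
Proof.
case=> uinj urel; split.
  move=> [a ha] [b hb] /= /(uinj _ _ ha hb) eab.
  by apply: eq_exist.
move=> l t; apply: (urel l (fun i => proj1_sig (t i))).
by move=> i; apply: (proj2_sig (t i)).
Qed.

Lemma pemb_id D : pemb D id.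
Proof. by split. Qed.

Definition mkH n (u : T -> T) : Hn n :=
  match pselect (pemb (A n) u) with
  | left h => exist _ (fun a => u (proj1_sig a)) (pemb_is_emb h)
  | right _ => exist _ (fun a => proj1_sig a) (pemb_is_emb (pemb_id (A n))) end.

Lemma mkHE n u : pemb (A n) u -> forall a, A n a -> ext (mkH n u) a = u a.
Proof. by move=> hu a ha; rewrite (extE _ ha) /mkH; case: pselect. Qed.

Lemma pemb_ext D u v : (forall a, D a -> u a = v a) -> pemb D u -> pemb D v.
Proof.
move=> E [uinj urel]; split.
  by move=> x y hx hy; rewrite -(E x hx) -(E y hy); apply: uinj.
move=> l t ht; suff <- : u \o t = v \o t by apply: urel.
by apply: funext => i /=; apply: E.
Qed.

Lemma mkH_ext n u v : (forall a, A n a -> u a = v a) -> mkH n u = mkH n v.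
Proof.
move=> E; case: (pselect (pemb (A n) u)) => hu.
  have hv := pemb_ext E hu.
  by apply: Heq => a ha; rewrite !mkHE //; apply: E.
have hv : ~ pemb (A n) v.
  by move=> hv; apply: hu; apply: (pemb_ext _ hv) => a ha; rewrite E.
rewrite /mkH; destruct (pselect (pemb (A n) u)); first by [].
by destruct (pselect (pemb (A n) v)).
Qed.

Lemma mkH_self n (x : Hn n) : mkH n (ext x) = x.
Proof. by apply: Heq => a ha; rewrite mkHE //; apply: ext_pemb. Qed.

Lemma pemb_sub D E u : D `<=` E -> pemb E u -> pemb D u.
Proof.
move=> DE [uinj urel]; split.
  by move=> x y hx hy; apply: uinj; apply: DE.
by move=> l t ht; apply: urel => i; apply: DE.
Qed.

Lemma pemb_comp D E u v : pemb D u -> (forall a, D a -> E (u a)) -> pemb E v ->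
  pemb D (v \o u).
Proof.
move=> [uinj urel] DE [vinj vrel]; split.
  move=> x y hx hy /= /(vinj _ _ (DE _ hx) (DE _ hy)); exact: uinj.
move=> l t ht; rewrite (urel l t ht).
exact: (vrel l (u \o t) (fun i => DE _ (ht i))).
Qed.

Lemma aut_pemb (g : T -> T) D : is_aut g -> pemb D g.
Proof.
move=> [gbij grel]; split.
  by move=> x y _ _; apply: bij_inj.
by move=> l t _; apply: grel.
Qed.

Lemma aut_id : is_aut (id : T -> T).
Proof. by split; [exists id|]. Qed.

Lemma aut_comp (g h : T -> T) : is_aut g -> is_aut h -> is_aut (g \o h).
Proof.
move=> [gb gr] [hb hr]; split; first exact: bij_comp.
by move=> l t; rewrite (hr l t) (gr l (h \o t)).
Qed.

Lemma extend n (x : Hn n) : exists g, is_aut g /\ mkH n g = x.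
Proof.
have [pinj prel] := ext_pemb x.
have [g [ga gE]] := uhK (Afin n) pinj prel.
exists g; split => //; rewrite -[RHS]mkH_self; exact: mkH_ext.
Qed.


Local Notation Sr := (@Sraw K A).
Local Notation inc m n P := (@Defs.incl K A m n P).

Definition pre m n (u : T -> T) (Q : set (Hn m)) : set (Hn n) :=
  [set x | exists y, Q y /\ compg u x y].
Arguments pre {m} n u Q.

Lemma compgE m n u (x : Hn n) (y : Hn m) : pemb (A m) u -> maps m n u ->
  (compg u x y <-> y = mkH m (ext x \o u)).
Proof.
move=> pu mu; have pc : pemb (A m) (ext x \o u) := pemb_comp pu mu (ext_pemb x).
split.
  move=> c; apply: Heq => a ha; rewrite mkHE // (extE _ ha) (c a ha (mu a ha)) /=.
  by rewrite (extE _ (mu a ha)).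
move=> -> a ha hb.
by rewrite -(extE (mkH m (ext x \o u)) ha) -(extE x hb) mkHE.
Qed.

Lemma preE m n u (Q : set (Hn m)) x : pemb (A m) u -> maps m n u ->
  (pre n u Q x <-> Q (mkH m (ext x \o u))).
Proof.
move=> pu mu; split => [[y [Qy /(compgE _ _ pu mu) <-]] // | Qx].
by exists (mkH m (ext x \o u)); split => //; apply/(compgE _ _ pu mu).
Qed.

Lemma inclE m n (P : set (Hn m)) (s : Hn n) : (m <= n)%N ->
  (inc m n P s <-> P (mkH m (ext s))).
Proof.
move=> mn; exact: (@preE m n id P s (pemb_id _) (Amono mn)).
Qed.

Section Ultra.
Variable X : Type.
Variable U : set (set X).
Hypothesis hU : ultra U.
Lemma uT : U setT. Proof. by case: hU. Qed.
Lemma u0 : ~ U set0. Proof. by case: hU => _ []. Qed.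
Lemma uS P Q : U P -> P `<=` Q -> U Q.
Proof. by case: hU => _ [_ [h _]] UP PQ; apply: h UP PQ. Qed.
Lemma uI P Q : U P -> U Q -> U (P `&` Q).
Proof. by case: hU => _ [_ [_ [h _]]]; apply: h. Qed.
Lemma uC P : U P \/ U (~` P).
Proof. by case: hU => _ [_ [_ [_ h]]]; apply: h. Qed.
Lemma uN P : U P -> ~ U (~` P).
Proof. by move=> UP UNP; apply: u0; apply: uS (uI UP UNP) _ => x []. Qed.
Lemma uNC P : ~ U P -> U (~` P).
Proof. by case: (uC P). Qed.
Lemma uiff P Q : (forall x, P x <-> Q x) -> (U P <-> U Q).
Proof. by move=> E; split => h; apply: uS h _ => x /E. Qed.
Lemma uex P : U P -> exists x, P x.
Proof.
move=> UP; case: (pselect (exists x, P x)) => // nP; exfalso; apply: u0.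
by apply: uS UP _ => x Px; apply: nP; exists x.
Qed.
End Ultra.

Lemma SG_ultra (b : Sr) n : SG b -> ultra (b n).
Proof. by case=> h _; apply: h. Qed.

Lemma SG_coh (b : Sr) m n (Q : set (Hn m)) : SG b -> (m <= n)%N ->
  (b m Q <-> b n (inc m n Q)).
Proof. by case=> _ h mn; apply: h. Qed.

Lemma pre_up m n N u (Q : set (Hn m)) : (n <= N)%N -> pemb (A m) u -> maps m n u ->
  forall s, inc n N (pre n u Q) s <-> pre N u Q s.
Proof.
move=> nN pu mu s.
have muN : maps m N u by move=> a ha; apply: (Amono nN); apply: mu.
rewrite (inclE _ _ nN) (preE _ _ pu mu) (preE _ _ pu muN).
suff -> : mkH m (ext (mkH n (ext s)) \o u) = mkH m (ext s \o u) by [].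
apply: mkH_ext => a ha /=; rewrite mkHE //; last exact: mu.
exact: (pemb_sub (Amono nN) (ext_pemb s)).
Qed.

Lemma pre_level (b : Sr) m n n' u (Q : set (Hn m)) : SG b -> pemb (A m) u ->
  maps m n u -> maps m n' u -> (b n (pre n u Q) <-> b n' (pre n' u Q)).
Proof.
move=> sb pu mu mu'.
rewrite (SG_coh _ sb (leq_maxl n n')) (SG_coh _ sb (leq_maxr n n')).
rewrite (uiff (SG_ultra _ sb) (pre_up Q (leq_maxl n n') pu mu)).
by rewrite (uiff (SG_ultra _ sb) (pre_up Q (leq_maxr n n') pu mu')).
Qed.

Lemma actE (b : Sr) m n u (Q : set (Hn m)) : SG b -> pemb (A m) u -> maps m n u ->
  (act b u Q <-> b n (pre n u Q)).
Proof.
move=> sb pu mu; split.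
  case=> n0 [sub h].
  have mu0 : maps m n0 u by move=> a ha; apply: sub; exists a.
  by rewrite (pre_level _ sb pu mu mu0).
by move=> h; exists n; split => // _ [a ha <-]; apply: mu.
Qed.

Definition D (b : Sr) m (Q : set (Hn m)) : set (Hn m) := [set f | act b (ext f) Q].

Lemma DE (b : Sr) m n (Q : set (Hn m)) f : SG b -> maps m n (ext f) ->
  (D b Q f <-> b n (pre n (ext f) Q)).
Proof. by move=> sb mf; apply: actE => //; apply: ext_pemb. Qed.

Lemma D_T (p : Sr) m (f : Hn m) : SG p -> D p setT f.
Proof.
move=> sp; have [n mf] := image_in_A m (ext f); rewrite (DE _ sp mf).
apply: (uS (SG_ultra n sp) (uT (SG_ultra n sp))) => x _.
by rewrite (preE _ _ (ext_pemb f) mf).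
Qed.

Lemma D_0 (p : Sr) m (f : Hn m) : SG p -> ~ D p set0 f.
Proof.
move=> sp; have [n mf] := image_in_A m (ext f); rewrite (DE _ sp mf).
move=> h; apply: (u0 (SG_ultra n sp)); apply: (uS (SG_ultra n sp) h) => x.
by move/(preE _ _ (ext_pemb f) mf).
Qed.

Lemma D_mono (p : Sr) m (Q1 Q2 : set (Hn m)) f : SG p -> Q1 `<=` Q2 ->
  D p Q1 f -> D p Q2 f.
Proof.
move=> sp sub; have [n mf] := image_in_A m (ext f); rewrite !(DE _ sp mf).
move=> h; apply: (uS (SG_ultra n sp) h) => x.
rewrite (preE _ _ (ext_pemb f) mf) (preE _ _ (ext_pemb f) mf); exact: sub.
Qed.

Lemma D_I (p : Sr) m (Q1 Q2 : set (Hn m)) f : SG p ->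
  D p Q1 f -> D p Q2 f -> D p (Q1 `&` Q2) f.
Proof.
move=> sp; have [n mf] := image_in_A m (ext f); rewrite !(DE _ sp mf).
move=> h1 h2; apply: (uS (SG_ultra n sp) (uI (SG_ultra n sp) h1 h2)) => x [a b].
move: a b; rewrite !(preE _ _ (ext_pemb f) mf) => a b; by split.
Qed.

Lemma D_C (p : Sr) m (Q : set (Hn m)) f : SG p ->
  (D p (~` Q) f <-> ~ D p Q f).
Proof.
move=> sp; have [n mf] := image_in_A m (ext f); rewrite !(DE _ sp mf).
have E : forall x, pre n (ext f) (~` Q) x <-> (~` pre n (ext f) Q) x.
  by move=> x; rewrite /= !(preE _ _ (ext_pemb f) mf).
rewrite (uiff (SG_ultra n sp) E); split.
  by move=> h1 h2; apply: (uN (SG_ultra n sp) h2 h1).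
exact: (uNC (SG_ultra n sp)).
Qed.

Lemma D_incl (p : Sr) m n (Q : set (Hn m)) (f : Hn n) : SG p -> (m <= n)%N ->
  (D p (inc m n Q) f <-> inc m n (D p Q) f).
Proof.
move=> sp mn; have [N mf] := image_in_A n (ext f).
rewrite (inclE _ _ mn).
have pg : pemb (A m) (ext (mkH m (ext f))) := ext_pemb _.
have mg : maps m N (ext (mkH m (ext f))).
  move=> a ha; rewrite mkHE //; first by apply: mf; apply: (Amono mn).
  exact: (pemb_sub (Amono mn) (ext_pemb f)).
rewrite (DE _ sp mf) (DE _ sp mg); apply: (uiff (SG_ultra N sp)) => x.
rewrite (preE _ _ (ext_pemb f) mf) (preE _ _ pg mg) (inclE _ _ mn).
suff -> : mkH m (ext (mkH n (ext x \o ext f))) = mkH m (ext x \o ext (mkH m (ext f))) by [].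
apply: mkH_ext => a ha /=; have han := Amono mn ha.
rewrite mkHE //; last exact: pemb_comp (ext_pemb f) mf (ext_pemb x).
rewrite /= mkHE //; exact: (pemb_sub (Amono mn) (ext_pemb f)).
Qed.

Lemma D_pre (p : Sr) m N u (Q : set (Hn m)) (x : Hn N) : SG p ->
  pemb (A m) u -> maps m N u ->
  (D p (pre N u Q) x <-> pre N u (D p Q) x).
Proof.
move=> sp pu mu; have [N' mx] := image_in_A N (ext x).
rewrite (preE _ _ pu mu).
have pxu : pemb (A m) (ext x \o u) := pemb_comp pu mu (ext_pemb x).
have pg : pemb (A m) (ext (mkH m (ext x \o u))) := ext_pemb _.
have mg : maps m N' (ext (mkH m (ext x \o u))).
  by move=> a ha; rewrite mkHE //; apply: mx; apply: mu.
rewrite (DE _ sp mx) (DE _ sp mg); apply: (uiff (SG_ultra N' sp)) => z.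
rewrite (preE _ _ (ext_pemb x) mx) (preE _ _ pg mg) (preE _ _ pu mu).
suff -> : mkH m (ext (mkH N (ext z \o ext x)) \o u) =
          mkH m (ext z \o ext (mkH m (ext x \o u))) by [].
apply: mkH_ext => a ha /=.
rewrite mkHE //; last exact: mu.
  by rewrite mkHE.
exact: pemb_comp (ext_pemb x) mx (ext_pemb z).
Qed.

Lemma Sraw_eq (b c : Sr) : (forall m Q, b m Q <-> c m Q) -> b = c.
Proof.
move=> E; apply: functional_extensionality_dep => m.
by apply: funext => Q; apply: propext; apply: E.
Qed.

Definition star (p b : Sr) : Sr := fun m Q => b m (D p Q).
Arguments star : clear implicits.

Lemma star_SG (p b : Sr) : SG p -> SG b -> SG (star p b).
Proof.
move=> sp sb; split.
  move=> n; rewrite /star; have ub := SG_ultra n sb.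
  split; [|split; [|split; [|split]]].
  - by apply: (uS ub (uT ub)) => f _; apply: D_T.
  - move=> h; apply: (u0 ub); apply: (uS ub h) => f hf.
    by exfalso; apply: (D_0 sp hf).
  - by move=> P Q h PQ; apply: (uS ub h) => f; apply: D_mono.
  - by move=> P Q h1 h2; apply: (uS ub (uI ub h1 h2)) => f [a1 a2]; apply: D_I.
  - move=> P; case: (uC ub (D p P)) => h; [by left|right].
    by apply: (uS ub h) => f hf; rewrite /= (D_C _ _ sp).
move=> m n mn Q; rewrite /star (SG_coh _ sb mn).
by apply: (uiff (SG_ultra n sb)) => f; rewrite (D_incl _ _ sp mn).
Qed.

Lemma pt_inc (g : T -> T) m n (Q : set (Hn m)) : is_aut g -> (m <= n)%N ->
  (inc m n Q (mkH n g) <-> Q (mkH m g)).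
Proof.
move=> ga mn; rewrite (inclE _ _ mn).
suff -> : mkH m (ext (mkH n g)) = mkH m g by [].
apply: mkH_ext => a ha; rewrite mkHE //; first exact: aut_pemb.
exact: (Amono mn).
Qed.

Definition pt (g : T -> T) : Sr := fun n Q => Q (mkH n g).
Arguments pt : clear implicits.

Lemma pt_SG (g : T -> T) : is_aut g -> SG (pt g).
Proof.
move=> ga; split.
  move=> n; rewrite /pt; split; [by []|split; [by []|split; [|split]]].
  - by move=> P Q h PQ; apply: PQ.
  - by move=> P Q.
  - by move=> P; case: (pselect (P (mkH n g))) => h; [left|right].
move=> m n mn Q; exact: (iff_sym (pt_inc Q ga mn)).
Qed.

Lemma act_star (b : Sr) (g : T -> T) : SG b -> is_aut g -> act b g = star b (pt g).
Proof.
move=> sb ga; apply: Sraw_eq => m Q; rewrite /star /pt /D /=.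
have [n mg] := image_in_A m g.
have pg : pemb (A m) g := aut_pemb _ ga.
have mg' : maps m n (ext (mkH m g)) by move=> a ha; rewrite mkHE //; apply: mg.
rewrite (actE Q sb pg mg) (actE Q sb (ext_pemb _) mg').
apply: (uiff (SG_ultra n sb)) => x.
rewrite (preE _ _ pg mg) (preE _ _ (ext_pemb _) mg').
suff -> : mkH m (ext x \o g) = mkH m (ext x \o ext (mkH m g)) by [].
by apply: mkH_ext => a ha /=; rewrite mkHE.
Qed.

Lemma pemb_autcomp n (g : T -> T) (f : Hn n) : is_aut g -> pemb (A n) (g \o ext f).
Proof.
move=> ga; apply: (pemb_comp (E := setT) (ext_pemb f)) => //.
exact: aut_pemb.
Qed.

Lemma act2E n (X : set (Hn n)) (g : T -> T) f : is_aut g ->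
  (act2 X g f <-> X (mkH n (g \o ext f))).
Proof.
move=> ga; have pc := pemb_autcomp f ga; split.
  move=> [f' [Xf' E]].
  suff <- : f' = mkH n (g \o ext f) by [].
  apply: Heq => a ha; rewrite mkHE // (extE _ ha) E /=.
  by rewrite (extE _ ha).
move=> h; exists (mkH n (g \o ext f)); split => // a ha.
by rewrite -(extE (mkH n (g \o ext f)) ha) mkHE //= (extE f ha).
Qed.

Lemma D_pt (g : T -> T) n (X : set (Hn n)) f : is_aut g ->
  (D (pt g) X f <-> act2 X g f).
Proof.
move=> ga; have [N mf] := image_in_A n (ext f).
rewrite (DE _ (pt_SG ga) mf) /pt (preE _ _ (ext_pemb f) mf) (act2E _ _ ga).
suff -> : mkH n (ext (mkH N g) \o ext f) = mkH n (g \o ext f) by [].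
apply: mkH_ext => a ha /=; rewrite mkHE //; first exact: aut_pemb.
exact: mf.
Qed.

Lemma D_star (p q : Sr) m (Q : set (Hn m)) f : SG p -> SG q ->
  (D (star p q) Q f <-> D q (D p Q) f).
Proof.
move=> sp sq; have [N mf] := image_in_A m (ext f).
rewrite (DE _ (star_SG sp sq) mf) (DE _ sq mf) /star.
apply: (uiff (SG_ultra N sq)) => x.
exact: (D_pre _ _ sp (ext_pemb f) mf).
Qed.

Lemma star_assoc (p q r : Sr) : SG p -> SG q -> SG r ->
  star (star p q) r = star p (star q r).
Proof.
move=> sp sq sr; apply: Sraw_eq => m Q; rewrite /star.
by apply: (uiff (SG_ultra m sr)) => f; apply: D_star.
Qed.

Lemma star_pt_id (b : Sr) : SG b -> star (pt id) b = b.
Proof.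
move=> sb; apply: Sraw_eq => m Q; rewrite /star.
apply: (uiff (SG_ultra m sb)) => f.
rewrite (D_pt _ _ aut_id) (act2E _ _ aut_id).
by rewrite (_ : mkH m (id \o ext f) = f) //; apply: mkH_self.
Qed.

Lemma act_pt (g : T -> T) : is_aut g -> act (pt id) g = pt g.
Proof.
move=> ga; rewrite (act_star (pt_SG aut_id) ga); exact: star_pt_id (pt_SG ga).
Qed.

Lemma isclosed_of (C : set Sr) : C `<=` @SG K A ->
  (forall a, SG a -> ~ C a -> exists n (Q : set (Hn n)),
      a n Q /\ forall b, SG b -> b n Q -> ~ C b) -> isclosed C.
Proof.
move=> sub h; split => //; split; first by move=> a [].
move=> a [sa nCa]; have [n [Q [aQ hb]]] := h a sa nCa.
by exists n, Q; split => // b sb bQ; split => //; apply: hb.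
Qed.

Lemma closed_sub (C : set Sr) : isclosed C -> C `<=` @SG K A.
Proof. by case. Qed.

Lemma closed_nbhd (C : set Sr) a : isclosed C -> SG a -> ~ C a ->
  exists n (Q : set (Hn n)), a n Q /\ forall b, SG b -> b n Q -> ~ C b.
Proof.
move=> [_ [_ h]] sa nCa; have [n [Q [aQ hb]]] := h a (conj sa nCa).
by exists n, Q; split => // b sb bQ; case: (hb b sb bQ).
Qed.

Lemma basic_closed n (Q : set (Hn n)) : isclosed [set b : Sr | SG b /\ b n Q].
Proof.
apply: isclosed_of => [b []//|a sa nC].
have naQ : ~ a n Q by move=> h; apply: nC.
exists n, (~` Q); split; first exact: (uNC (SG_ultra n sa)).
by move=> b sb bQ [_ bQ']; apply: (uN (SG_ultra n sb) bQ' bQ).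
Qed.

Lemma SG_closed : isclosed (@SG K A).
Proof. by apply: isclosed_of => // a sa. Qed.

Lemma closedI (C1 C2 : set Sr) : isclosed C1 -> isclosed C2 -> isclosed (C1 `&` C2).
Proof.
move=> c1 c2; apply: isclosed_of => [b [h _]|a sa nC]; first exact: (closed_sub c1).
case: (pselect (C1 a)) => h1.
  have nC2 : ~ C2 a by move=> h2; apply: nC.
  have [n [Q [aQ hb]]] := closed_nbhd c2 sa nC2.
  by exists n, Q; split => // b sb bQ [_ h2]; apply: (hb b sb bQ h2).
have [n [Q [aQ hb]]] := closed_nbhd c1 sa h1.
by exists n, Q; split => // b sb bQ [h1' _]; apply: (hb b sb bQ h1').
Qed.

Lemma closed_ext (C C' : set Sr) : isclosed C ->
  (forall b, SG b -> (C b <-> C' b)) -> C' `<=` @SG K A -> isclosed C'.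
Proof.
move=> cC E sub; apply: isclosed_of => // a sa nC'.
have nC : ~ C a by rewrite E.
have [n [Q [aQ hb]]] := closed_nbhd cC sa nC.
by exists n, Q; split => // b sb bQ; rewrite -E //; apply: hb.
Qed.

Lemma closed_bigcap (I : Type) (C : I -> set Sr) : (forall i, isclosed (C i)) ->
  isclosed [set b | SG b /\ forall i, C i b].
Proof.
move=> cC; apply: isclosed_of => [b []//|a sa nC].
case: (pselect (exists i, ~ C i a)) => [[i hi]|h]; last first.
  exfalso; apply: nC; split => // i; case: (pselect (C i a)) => // hi.
  by exfalso; apply: h; exists i.
have [n [Q [aQ hb]]] := closed_nbhd (cC i) sa hi.
by exists n, Q; split => // b sb bQ [_ h]; apply: (hb b sb bQ).
Qed.

Lemma two_nbhd (b : Sr) n1 (Q1 : set (Hn n1)) n2 (Q2 : set (Hn n2)) :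
  SG b -> b n1 Q1 -> b n2 Q2 -> exists N (Q : set (Hn N)),
  b N Q /\ forall c, SG c -> c N Q -> c n1 Q1 /\ c n2 Q2.
Proof.
move=> sb h1 h2; set N := maxn n1 n2.
have l1 : (n1 <= N)%N := leq_maxl _ _.
have l2 : (n2 <= N)%N := leq_maxr _ _.
exists N, (inc n1 N Q1 `&` inc n2 N Q2); split.
  apply: (uI (SG_ultra N sb)).
    by rewrite -(SG_coh _ sb l1).
  by rewrite -(SG_coh _ sb l2).
move=> c sc cQ; rewrite (SG_coh _ sc l1) (SG_coh _ sc l2); split.
  by apply: (uS (SG_ultra N sc) cQ) => x [].
by apply: (uS (SG_ultra N sc) cQ) => x [].
Qed.

Lemma fin_nbhd (I : Type) (b : Sr) (R : Sr -> I -> Prop) : SG b ->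
  (forall i, exists n (Q : set (Hn n)), b n Q /\ forall c, SG c -> c n Q -> R c i) ->
  forall F : set I, finite_set F -> exists N (Q : set (Hn N)),
    b N Q /\ forall c, SG c -> c N Q -> forall i, F i -> R c i.
Proof.
move=> sb hR; apply: finite_ind.
  by exists 0%N, setT; split => //; apply: (uT (SG_ultra 0 sb)).
move=> B x _ [N [Q [bQ hQ]]].
have [n [Q' [bQ' hQ']]] := hR x.
have [N' [Q'' [bQ'' h]]] := two_nbhd sb bQ bQ'.
exists N', Q''; split => // c sc cQ i [->|Bi]; have [c1 c2] := h c sc cQ.
  exact: hQ'.
exact: hQ.
Qed.

Lemma density (b : Sr) n (Q : set (Hn n)) : SG b -> b n Q ->
  exists g, is_aut g /\ Q (mkH n g).
Proof.
move=> sb bQ; have [x Qx] := uex (SG_ultra n sb) bQ.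
have [g [ga gx]] := extend x.
by exists g; split => //; rewrite gx.
Qed.



Definition Gt := {g : T -> T | is_aut g}.
Definition cyl n (Q : set (Hn n)) : set Gt := [set g | Q (mkH n (proj1_sig g))].

Lemma compact (I : Type) (C : I -> set Sr) :
  (forall i, isclosed (C i)) ->
  (forall F : set I, finite_set F -> exists b, SG b /\ forall i, F i -> C i b) ->
  exists b, SG b /\ forall i, C i b.
Proof.
move=> cC FIP.
pose J := (set I * {n : nat & set (Hn n)})%type.
pose Dj := [set j : J | finite_set j.1 /\ forall b, SG b ->
   (forall i, j.1 i -> C i b) -> b (projT1 j.2) (projT2 j.2)].
pose Bj := fun j : J => cyl (projT2 j.2).
have FF : Filter (filter_from Dj Bj).
  apply: filter_from_filter.
    exists (set0, existT _ 0%N setT); split => //= b sb _.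
    exact: (uT (SG_ultra 0 sb)).
  move=> [F1 [n1 Q1]] [F2 [n2 Q2]] [f1 h1] [f2 h2].
  have l1 : (n1 <= maxn n1 n2)%N := leq_maxl _ _.
  have l2 : (n2 <= maxn n1 n2)%N := leq_maxr _ _.
  exists (F1 `|` F2, existT _ (maxn n1 n2)
      (inc n1 (maxn n1 n2) Q1 `&` inc n2 (maxn n1 n2) Q2)).
    split => /=; first by rewrite finite_setU.
    move=> b sb hb; apply: (uI (SG_ultra _ sb)).
      by rewrite -(SG_coh _ sb l1); apply: h1 => // i Fi; apply: hb; left.
    by rewrite -(SG_coh _ sb l2); apply: h2 => // i Fi; apply: hb; right.
  move=> [g ga] [/= q1 q2]; split => /=.
    by move: q1; rewrite (pt_inc _ ga l1).
  by move: q2; rewrite (pt_inc _ ga l2).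
have PF : ProperFilter (filter_from Dj Bj).
  apply: filter_from_proper => -[F [n Q]] [fF hF] /=.
  have [b [sb hb]] := FIP F fF.
  have [g [ga gQ]] := density sb (hF b sb hb).
  by exists (exist _ g ga).
have [U [UU sub]] := ultraFilterLemma PF.
pose a : Sr := fun n Q => U (cyl Q).
have sa : SG a.
  split.
    move=> n; split; [|split; [|split; [|split]]].
    - by apply: (filterS _ filterT).
    - move=> h; apply: (filter_not_empty U); apply: (@filterS _ U _ (@cyl n set0) set0 _ h).
      by move=> g [].
    - by move=> P Q h PQ; apply: (filterS _ h) => g; apply: PQ.
    - by move=> P Q h1 h2; exact: filterI h1 h2.
    - by move=> P; case: (in_ultra_setVsetC (cyl P) UU) => h; [left|right].
  move=> m n mn Q.
  have E : forall g : Gt, cyl Q g <-> cyl (inc m n Q) g.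
    by move=> g; exact: (iff_sym (pt_inc Q (proj2_sig g) mn)).
  split => h.
    by apply: (@filterS _ U _ (@cyl m Q) _ _ h) => g hg; exact: (proj1 (E g) hg).
  by apply: (@filterS _ U _ _ (@cyl m Q) _ h) => g hg; exact: (proj2 (E g) hg).
exists a; split => // i.
case: (pselect (C i a)) => // nC; exfalso.
have [n [Q [aQ hb]]] := closed_nbhd (cC i) sa nC.
have : U (cyl (~` Q)).
  apply: sub; exists ([set i], existT _ n (~` Q)) => //; split => /=.
    exact: finite_set1.
  move=> b sb hCi; apply: (uNC (SG_ultra n sb)) => bQ.
  exact: (hb b sb bQ (hCi i erefl)).
move=> h; apply: (filter_not_empty U).
apply: (@filterS _ U _ _ set0 _ (filterI aQ h)).
by move=> g [q nq]; apply: nq.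
Qed.

Lemma compact_fin (I : Type) (C0 : set Sr) (C : I -> set Sr) :
  isclosed C0 -> (forall i, isclosed (C i)) ->
  (forall b, SG b -> C0 b -> exists i, ~ C i b) ->
  exists F : set I, finite_set F /\
    forall b, SG b -> C0 b -> exists i, F i /\ ~ C i b.
Proof.
move=> c0 cC hyp.
case: (pselect (exists F : set I, finite_set F /\
    forall b, SG b -> C0 b -> exists i, F i /\ ~ C i b)) => // nF; exfalso.
pose C' := fun o : option I => match o with Some i => C i | None => C0 end.
have cC' : forall o, isclosed (C' o) by case.
have FIP : forall F' : set (option I), finite_set F' ->
    exists b, SG b /\ forall o, F' o -> C' o b.
  move=> F' fF'; pose F := [set i | F' (Some i)].
  have fF : finite_set F := finite_preim_Some fF'.
  case: (pselect (exists b, SG b /\ C0 b /\ forall i, F i -> C i b)).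
    move=> [b [sb [cb hb]]]; exists b; split => // -[i|] Fo //=.
    exact: hb.
  move=> nb; exfalso; apply: nF; exists F; split => // b sb cb.
  case: (pselect (exists i, F i /\ ~ C i b)) => // ne; exfalso.
  apply: nb; exists b; split => //; split => // i Fi.
  case: (pselect (C i b)) => // nc; exfalso; apply: ne; exists i; split => //.
have [b [sb hb]] := compact cC' FIP.
have [i ni] := hyp b sb (hb None).
exact: ni (hb (Some i)).
Qed.

Lemma SG_eq_of (b c : Sr) : SG b -> SG c -> (forall n Q, b n Q -> c n Q) -> b = c.
Proof.
move=> sb sc h; apply: Sraw_eq => n Q; split; first exact: h.
move=> cQ; case: (pselect (b n Q)) => // nb; exfalso.
have h' := h n _ (uNC (SG_ultra n sb) nb).
exact: (uN (SG_ultra n sc) cQ h').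
Qed.

Lemma SG_neq (b c : Sr) : SG b -> SG c -> b <> c ->
  exists n (Q : set (Hn n)), b n Q /\ ~ c n Q.
Proof.
move=> sb sc nbc.
case: (pselect (exists n (Q : set (Hn n)), b n Q /\ ~ c n Q)) => // h; exfalso.
apply: nbc; apply: SG_eq_of => // n Q bQ.
case: (pselect (c n Q)) => // nc; exfalso; apply: h; exists n, Q; by split.
Qed.

Lemma closed_cond n (Q : set (Hn n)) (P : Prop) :
  isclosed [set b : Sr | SG b /\ (P -> b n Q)].
Proof.
apply: isclosed_of => [b []//|a sa nC].
case: (pselect P) => hP; last by exfalso; apply: nC; split.
have naQ : ~ a n Q by move=> h; apply: nC; split.
exists n, (~` Q); split; first exact: (uNC (SG_ultra n sa)).
by move=> b sb bQ [_ h]; apply: (uN (SG_ultra n sb) (h hP) bQ).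
Qed.

Lemma D_nbhd (q : Sr) m (Q : set (Hn m)) f : SG q ->
  exists N (P : set (Hn N)), q N P /\ forall c, SG c -> c N P -> (D c Q f <-> D q Q f).
Proof.
move=> sq; have [N mf] := image_in_A m (ext f).
case: (pselect (D q Q f)) => h.
  exists N, (pre N (ext f) Q); split; first by rewrite -(DE _ sq mf).
  by move=> c sc cP; split => // _; rewrite (DE _ sc mf).
exists N, (~` pre N (ext f) Q); split.
  by apply: (uNC (SG_ultra N sq)); rewrite -(DE _ sq mf).
move=> c sc cP; split => // hc; exfalso; move: hc; rewrite (DE _ sc mf).
by move/(uN (SG_ultra N sc)); apply.
Qed.

Lemma closed_D m (Q : set (Hn m)) f (P : Prop) :
  isclosed [set q : Sr | SG q /\ (D q Q f <-> P)].
Proof.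
apply: isclosed_of => [b []//|a sa nC].
have [N [P' [aP' h]]] := D_nbhd Q f sa.
exists N, P'; split => // b sb bP' [_ hb]; apply: nC; split => //.
by rewrite -(h b sb bP').
Qed.

Lemma image_closed (p : Sr) (C : set Sr) : SG p -> isclosed C ->
  isclosed [set c | exists b, C b /\ star p b = c].
Proof.
move=> sp cC; apply: isclosed_of.
  by move=> c [b [Cb <-]]; apply: star_SG => //; apply: (closed_sub cC).
move=> g sg nI.
case: (pselect (exists n (Q : set (Hn n)), g n Q /\
   forall c, SG c -> c n Q -> ~ (exists b, C b /\ star p b = c))) => // hn; exfalso.
pose J := {n : nat & set (Hn n)}.
pose CJ := fun j : J => [set b : Sr | SG b /\ (g (projT1 j) (projT2 j) -> b (projT1 j) (D p (projT2 j)))].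
case: (pselect (forall b, SG b -> C b -> exists j, ~ CJ j b)) => hyp.
  have [F [fF hF]] := compact_fin cC (fun j => closed_cond _ _) hyp.
  have [N [Q' [gQ' hQ']]] := fin_nbhd (R := fun c (j : J) =>
      g (projT1 j) (projT2 j) -> c (projT1 j) (projT2 j)) sg
      (fun j => match pselect (g (projT1 j) (projT2 j)) with
       | left h => ex_intro _ (projT1 j) (ex_intro _ (projT2 j) (conj h (fun c _ cj _ => cj)))
       | right h => ex_intro _ 0%N (ex_intro _ setT (conj (uT (SG_ultra 0 sg)) (fun c _ _ gj => False_ind _ (h gj))))
       end) fF.
  apply: hn; exists N, Q'; split => // c sc cQ [b [Cb ec]].
  have sb : SG b := closed_sub cC Cb.
  have [j [Fj nj]] := hF b sb Cb.
  apply: nj; split => // gj.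
  have := hQ' c sc cQ j Fj gj.
  by rewrite -ec.
have [b [sb [Cb hb]]] : exists b, SG b /\ C b /\ forall j, CJ j b.
  case: (pselect (exists b, SG b /\ C b /\ forall j, CJ j b)) => // nb; exfalso.
  apply: hyp => b sb Cb.
  case: (pselect (exists j, ~ CJ j b)) => // nj; exfalso; apply: nb.
  exists b; split => //; split => // j; case: (pselect (CJ j b)) => // nc.
  by exfalso; apply: nj; exists j.
apply: nI; exists b; split => //; apply: esym.
apply: (SG_eq_of sg (star_SG sp sb)) => n Q gQ.
exact: (proj2 (hb (existT (fun k => set (Hn k)) n Q)) gQ).
Qed.

Variable M : set Sr.
Hypothesis hM : minimal_subflow M.

Lemma M_SG : M `<=` @SG K A. Proof. by case: hM. Qed.
Lemma M_ne : M !=set0. Proof. by case: hM => _ []. Qed.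
Lemma M_closed : isclosed M. Proof. by case: hM => _ [_ []]. Qed.
Lemma M_inv a (g : T -> T) : M a -> is_aut g -> M (act a g).
Proof. by case: hM => _ [_ [_ [h _]]]; apply: h. Qed.
Lemma M_min (N : set Sr) : N `<=` M -> N !=set0 -> isclosed N -> Defs.invariant N -> N = M.
Proof. by case: hM => _ [_ [_ [_ h]]]; apply: h. Qed.

Lemma star_M (p b : Sr) : M p -> SG b -> M (star p b).
Proof.
move=> Mp sb; have sp := M_SG Mp.
case: (pselect (M (star p b))) => // nM; exfalso.
have [n [Q [bQ h]]] := closed_nbhd M_closed (star_SG sp sb) nM.
have [g [ga gQ]] := density sb bQ.
apply: (h (act p g)).
  by rewrite (act_star sp ga); apply: star_SG => //; apply: pt_SG.
  by rewrite (act_star sp ga).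
exact: M_inv.
Qed.

Lemma retr_of_idem (u : Sr) : M u -> star u u = u -> retraction M (star u).
Proof.
move=> Mu uu; have su := M_SG Mu; split; [|split; [|split]].
- by move=> a sa; apply: star_M.
- move=> n S; split; first by move=> a [].
  move=> a [sa h]; exists n, (D u S); split => // b sb bS; by split.
- move=> a g sa ga.
  rewrite (act_star sa ga) (act_star (star_SG su sa) ga).
  by rewrite (star_assoc su sa (pt_SG ga)).
move=> a Ma.
pose I := [set c | exists b, SG b /\ star u b = c].
have IM : I = M.
  apply: M_min.
  - by move=> c [b [sb <-]]; apply: star_M.
  - by exists (star u u), u; split.
  - exact: (image_closed su SG_closed).
  - move=> c g [b [sb <-]] ga; exists (star b (pt g)); split.
      by apply: star_SG => //; apply: pt_SG.
    rewrite (act_star (star_SG su sb) ga).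
    by rewrite (star_assoc su sb (pt_SG ga)).
have : I a by rewrite IM.
move=> [b [sb <-]].
by rewrite -(star_assoc su su sb) uu.
Qed.

Lemma retr_star (phi : Sr -> Sr) : retraction M phi ->
  M (phi (pt id)) /\ forall a, SG a -> phi a = star (phi (pt id)) a.
Proof.
move=> [phiM [phic [phieq phiid]]].
have Mp := phiM _ (pt_SG aut_id); split => //.
have sp := M_SG Mp.
have phipt : forall g, is_aut g -> phi (pt g) = star (phi (pt id)) (pt g).
  move=> g ga; rewrite -(act_star sp ga) -(phieq _ _ (pt_SG aut_id) ga).
  by rewrite act_pt.
move=> a sa; apply: SG_eq_of; [exact: (M_SG (phiM _ sa))|exact: star_SG|].
move=> n Q pQ; case: (pselect (star (phi (pt id)) a n Q)) => // nQ; exfalso.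
have [_ hO] := phic n Q.
have [n1 [Q1 [aQ1 hQ1]]] := hO a (conj sa pQ).
have aQ2 : a n (~` D (phi (pt id)) Q) by apply: (uNC (SG_ultra n sa)).
have [N [Q' [aQ' h]]] := two_nbhd sa aQ1 aQ2.
have [g [ga gQ']] := density sa aQ'.
have sg := pt_SG ga.
have [g1 g2] := h _ sg gQ'.
have [_ pg] := hQ1 _ sg g1.
have pg' : pt g n (D (phi (pt id)) Q) by rewrite phipt in pg.
exact: (uN (SG_ultra n sg) pg' g2).
Qed.

Lemma OC_self n (S : set (Hn n)) : orbit_closure S S.
Proof.
move=> F _; exists id; split; first exact: aut_id.
by move=> f _; rewrite (act2E _ _ aut_id) mkH_self.
Qed.

Lemma OC_closed n (S : set (Hn n)) : closedH (orbit_closure S).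
Proof.
move=> X h F fF; have [Y [OY aY]] := h F fF.
have [g [ga aG]] := OY F fF; exists g; split => // f Ff.
by rewrite (aY f Ff); apply: aG.
Qed.

Lemma OC_inv n (S : set (Hn n)) : invariantH (orbit_closure S).
Proof.
move=> X g OX ga F fF.
have fF' := finite_image (fun f => mkH n (g \o ext f)) fF.
have [h [ha aH]] := OX _ fF'.
exists (h \o g); split; first exact: aut_comp.
move=> f Ff; rewrite (act2E _ _ ga) (act2E _ _ (aut_comp ha ga)).
have Fi : [set mkH n (g \o ext f0) | f0 in F] (mkH n (g \o ext f)) by exists f.
rewrite (aH _ Fi) (act2E _ _ ha).
suff -> : mkH n (h \o ext (mkH n (g \o ext f))) = mkH n ((h \o g) \o ext f) by [].
by apply: mkH_ext => a ha' /=; rewrite mkHE //; apply: pemb_autcomp.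
Qed.

Lemma OC_least n (S : set (Hn n)) (Z : set (set (Hn n))) :
  closedH Z -> invariantH Z -> Z S -> orbit_closure S `<=` Z.
Proof.
move=> cZ iZ ZS X OX; apply: cZ => F fF; have [g [ga aG]] := OX F fF.
by exists (act2 S g); split => //; apply: iZ.
Qed.

Definition YM n (Q : set (Hn n)) : set (set (Hn n)) :=
  [set X | exists q, M q /\ D q Q = X].

Lemma D_act (q : Sr) (g : T -> T) n (Q : set (Hn n)) : SG q -> is_aut g ->
  D (act q g) Q = act2 (D q Q) g.
Proof.
move=> sq ga; rewrite (act_star sq ga).
apply/seteqP; split => f /=.
  by rewrite (D_star _ _ sq (pt_SG ga)) (D_pt _ _ ga).
by rewrite (D_star _ _ sq (pt_SG ga)) (D_pt _ _ ga).
Qed.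

Lemma YM_inv n (Q : set (Hn n)) : invariantH (YM Q).
Proof.
move=> X g [q [Mq <-]] ga; exists (act q g); split; first exact: M_inv.
exact: D_act (M_SG Mq) ga.
Qed.

Lemma YM_closed n (Q : set (Hn n)) : closedH (YM Q).
Proof.
move=> X h.
pose C := fun o : option (Hn n) => match o with
  | None => M | Some f => [set q : Sr | SG q /\ (D q Q f <-> X f)] end.
have cC : forall o, isclosed (C o) by case => [f|]; [apply: closed_D|apply: M_closed].
have FIP : forall F' : set (option (Hn n)), finite_set F' ->
    exists b, SG b /\ forall o, F' o -> C o b.
  move=> F' fF'; have fF := finite_preim_Some fF'.
  have [Y [[q [Mq <-]] aY]] := h _ fF.
  exists q; split; first exact: M_SG.
  case => [f|] Fo /=; last exact: Mq.
  by split; [exact: M_SG|symmetry; apply: aY].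
have [q [sq hq]] := compact cC FIP.
exists q; split; first exact: (hq None).
apply/seteqP; split => f; have [_ e] := hq (Some f); by rewrite /= e.
Qed.

Lemma YM_min n (Q : set (Hn n)) (Z : set (set (Hn n))) : Z `<=` YM Q -> Z !=set0 ->
  closedH Z -> invariantH Z -> Z = YM Q.
Proof.
move=> sub [X0 ZX0] cZ iZ.
pose N := [set q | M q /\ Z (D q Q)].
have NM : N = M.
  apply: M_min.
  - by move=> q [].
  - by have [q [Mq eq]] := sub _ ZX0; exists q; split => //; rewrite eq.
  - apply: isclosed_of => [q [Mq _]|a sa nN]; first exact: M_SG.
    case: (pselect (M a)) => Ma; last first.
      have [k [P [aP hP]]] := closed_nbhd M_closed sa Ma.
      by exists k, P; split => // b sb bP [Mb _]; apply: (hP b sb bP Mb).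
    have nZ : ~ Z (D a Q) by move=> z; apply: nN.
    have [F [fF hF]] : exists F, finite_set F /\ forall Y, Z Y -> ~ agree F (D a Q) Y.
      case: (pselect (exists F, finite_set F /\ forall Y, Z Y -> ~ agree F (D a Q) Y)) => // nF.
      exfalso; apply: nZ; apply: cZ => F fF.
      case: (pselect (exists Y, Z Y /\ agree F (D a Q) Y)) => // nY; exfalso; apply: nF.
      by exists F; split => // Y ZY aY; apply: nY; exists Y.
    have [k [P [aP hP]]] := fin_nbhd (R := fun c f => D c Q f <-> D a Q f) sa
      (fun f => D_nbhd Q f sa) fF.
    exists k, P; split => // b sb bP [Mb Zb]; apply: (hF _ Zb) => f Ff.
    by rewrite (hP b sb bP f Ff).
  - move=> q g [Mq Zq] ga; split; first exact: M_inv.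
    by rewrite (D_act _ (M_SG Mq) ga); apply: iZ.
apply/seteqP; split => // X [q [Mq <-]].
have : N q by rewrite NM.
by case.
Qed.

Lemma YM_sub_OC n (S : set (Hn n)) (q : Sr) : SG q -> orbit_closure S (D q S).
Proof.
move=> sq F fF.
have [k [P [qP hP]]] := fin_nbhd (R := fun c f => D c S f <-> D q S f) sq
  (fun f => D_nbhd S f sq) fF.
have [g [ga gP]] := density sq qP.
exists g; split => // f Ff; rewrite -(D_pt _ _ ga).
by symmetry; apply: (hP _ (pt_SG ga) gP f Ff).
Qed.

Lemma D_minimal (p : Sr) n (Q : set (Hn n)) : M p -> minimal_subset (D p Q).
Proof.
move=> Mp.
have sub : orbit_closure (D p Q) `<=` YM Q.
  by apply: OC_least; [exact: YM_closed|exact: YM_inv|exists p].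
have E : orbit_closure (D p Q) = YM Q.
  apply: YM_min => //; [by exists (D p Q); apply: OC_self|exact: OC_closed|exact: OC_inv].
split; first by exists (D p Q); apply: OC_self.
split; first exact: OC_closed.
split; first exact: OC_inv.
move=> Z ZO Zne cZ iZ; rewrite E; apply: YM_min => //.
by rewrite -E.
Qed.

Lemma exists_fix n (S : set (Hn n)) : minimal_subset S -> exists q, M q /\ D q S = S.
Proof.
move=> [_ [_ [_ hmin]]].
have sub : YM S `<=` orbit_closure S.
  by move=> X [q [Mq <-]]; apply: YM_sub_OC; apply: M_SG.
have [q0 Mq0] := M_ne.
have E := hmin _ sub (ex_intro _ (D q0 S) (ex_intro _ q0 (conj Mq0 erefl))) (@YM_closed n S) (@YM_inv n S).
have : YM S S by rewrite E; apply: OC_self.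
by case=> q [Mq e]; exists q.
Qed.

Definition semig (B : set Sr) := forall p q, B p -> B q -> B (star p q).

Lemma ellis (Z : set Sr) : Z `<=` @SG K A -> Z !=set0 -> isclosed Z -> semig Z ->
  exists u, Z u /\ star u u = u.
Proof.
move=> ZS Zne cZ sZ.
pose P := [set W : set Sr | (Z `\` W) !=set0 /\ isclosed (Z `\` W) /\ semig (Z `\` W)].
have [W [PW Wmax]] : exists W, P W /\ forall B, W `<` B -> ~ P B.
  apply: Zorn_bigcup => F FP Ftot.
  pose U := \bigcup_(X in F) X.
  have cl : forall i : {W | F W}, isclosed (Z `\` proj1_sig i).
    by move=> i; have [_ [h _]] := FP _ (proj2_sig i).
  split; [|split].
  - case: (pselect ((Z `\` U) !=set0)) => // ne; exfalso.
    have hyp : forall b, SG b -> Z b -> exists i : {W | F W}, ~ (Z `\` proj1_sig i) b.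
      move=> b sb Zb.
      case: (pselect (exists i : {W | F W}, ~ (Z `\` proj1_sig i) b)) => // ni; exfalso.
      apply: ne; exists b; split => // -[W' FW' W'b]; apply: ni.
      by exists (exist _ W' FW') => /= -[_]; apply.
    have [F' [fF' hF']] := compact_fin cZ cl hyp.
    have key : forall F'' : set {W | F W}, finite_set F'' ->
        exists W0, (W0 = set0 \/ F W0) /\ forall i, F'' i -> proj1_sig i `<=` W0.
      apply: finite_ind; first by exists set0; split; [left|].
      move=> B x _ [W0 [h0 hB]]; case: h0 => [e0|FW0].
        exists (proj1_sig x); split; first by right; apply: (proj2_sig x).
        move=> i [->|Bi] //; move=> t ti; have := hB i Bi t ti; by rewrite e0.
      case: (Ftot _ _ FW0 (proj2_sig x)) => hsub.
        exists (proj1_sig x); split; first by right; apply: (proj2_sig x).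
        by move=> i [->|Bi] // t ti; apply: hsub; apply: (hB i Bi).
      exists W0; split; first by right.
      by move=> i [->|Bi] //; apply: hB.
    have [W0 [W0P W0max]] := key F' fF'.
    have [b [Zb nW0]] : exists b, Z b /\ ~ W0 b.
      case: W0P => [->|FW0]; first by have [b Zb] := Zne; exists b; split.
      by have [[b [Zb nb]] _] := FP _ FW0; exists b; split.
    have [i [F'i ni]] := hF' b (ZS _ Zb) Zb.
    by apply: ni; split => // ib; apply: nW0; apply: (W0max _ F'i _ ib).
  - apply: (closed_ext (C := Z `&` [set b | SG b /\ forall i : {W | F W}, (Z `\` proj1_sig i) b])).
    + exact: closedI cZ (closed_bigcap cl).
    + move=> b sb; split.
        move=> [Zb [_ h]]; split => // -[W' FW' W'b].
        by have [_] := h (exist _ W' FW'); apply.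
      move=> [Zb nU]; split => //; split => // -[W' FW'] /=; split => // W'b.
      by apply: nU; exists W'.
    + by move=> b [Zb _]; apply: ZS.
  - move=> p q [Zp nUp] [Zq nUq]; split; first exact: sZ.
    move=> [W' FW' W'pq]; have [_ [_ sW']] := FP _ FW'.
    have : (Z `\` W') (star p q).
      apply: sW'; split => // h; [apply: nUp|apply: nUq]; by exists W'.
    by case.
have [B0ne [cB0 sB0]] := PW.
set B0 := Z `\` W in B0ne cB0 sB0 *.
have minB : forall B', B' `<=` B0 -> B' !=set0 -> isclosed B' -> semig B' -> B0 `<=` B'.
  move=> B' sub ne cB sB x B0x; case: (pselect (B' x)) => // nB'; exfalso.
  apply: (Wmax (~` B')).
    split.
      by move=> y Wy B'y; have [_ nWy] := sub _ B'y; apply: nWy.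
    by move=> h; have [_ nWx] := B0x; apply: nWx; apply: h.
  have E' : Z `\` ~` B' = B'.
    apply/seteqP; split => y.
      by move=> [Zy nny]; case: (pselect (B' y)) => // ny; exfalso; apply: nny.
    by move=> B'y; split; [exact: (proj1 (sub _ B'y))|move=> /(_ B'y)].
  by rewrite /P /= E'.
have [u B0u] := B0ne; have su : SG u := ZS _ (proj1 B0u).
have B0S : forall c, B0 c -> SG c by move=> c [Zc _]; apply: ZS.
have : B0 `<=` [set c | exists b, B0 b /\ star u b = c].
  apply: minB.
  - by move=> c [b [B0b <-]]; apply: sB0.
  - by exists (star u u), u.
  - exact: image_closed su cB0.
  - move=> c1 c2 [b1 [B1 <-]] [b2 [B2 <-]]; exists (star b1 (star u b2)); split.
      by apply: (sB0) => //; apply: (sB0).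
    by rewrite (star_assoc su (B0S _ B1) (star_SG su (B0S _ B2))).
move=> /(_ u B0u) [b [B0b ub]].
have : B0 `<=` [set c | B0 c /\ star u c = u].
  apply: minB.
  - by move=> c [].
  - by exists b.
  - apply: (closed_ext (C := B0 `&` [set c | SG c /\ star u c = u])).
    + refine (closedI cB0 _); apply: isclosed_of => [c []//|c sc nc].
      have ne : star u c <> u by move=> e; apply: nc.
      have [n [Q [cQ nuQ]]] := SG_neq (star_SG su sc) su ne.
      exists n, (D u Q); split => // d sd dQ [_ e]; apply: nuQ.
      by rewrite -e.
    + by move=> c sc; split => -[h1 h2]; split => //; case: h2.
    + by move=> c [B0c _]; apply: B0S.
  - move=> c1 c2 [B1 e1] [B2 e2]; split; first exact: sB0.
    by rewrite -(star_assoc su (B0S _ B1) (B0S _ B2)) e1 e2.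
move=> /(_ u B0u) [_ uu]; exists u; split => //; exact: (proj1 B0u).
Qed.

Lemma u_union (X : Type) (U : set (set X)) (P Q : set X) : ultra U ->
  (U (P `|` Q) <-> U P \/ U Q).
Proof.
move=> hU; split.
  move=> h; case: (pselect (U P)) => hP; first by left.
  case: (pselect (U Q)) => hQ; first by right.
  exfalso; apply: (u0 hU).
  apply: (uS hU (uI hU h (uI hU (uNC hU hP) (uNC hU hQ)))).
  by move=> x [[px|qx] [npx nqx]].
by case=> h; apply: (uS hU h) => x hx; [left|right].
Qed.

Lemma Bgen_min n (S : set (Hn n)) : minimal_subset S -> Bgen S.
Proof. by move=> mS F hmin _ _ _; apply: hmin. Qed.

Lemma Bgen_0 n : Bgen (set0 : set (Hn n)).
Proof. by move=> F _ h0 _ _. Qed.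

Lemma Bgen_C n (P : set (Hn n)) : Bgen P -> Bgen (~` P).
Proof. by move=> bP F h1 h0 hC hU; apply: (hC); apply: (bP F h1 h0 hC hU). Qed.

Lemma Bgen_U n (P Q : set (Hn n)) : Bgen P -> Bgen Q -> Bgen (P `|` Q).
Proof.
move=> bP bQ F h1 h0 hC hU; apply: (hU); [exact: (bP F h1 h0 hC hU)|exact: (bQ F h1 h0 hC hU)].
Qed.

Lemma Bgen_sep n (a c : Sr) (P : set (Hn n)) : SG a -> SG c -> Bgen P ->
  (forall S, minimal_subset S -> (a n S <-> c n S)) -> (a n P <-> c n P).
Proof.
move=> sa sc bP h; apply: (bP [set P | a n P <-> c n P]) => //.
- by split => hh; exfalso; [apply: (u0 (SG_ultra n sa) hh)|apply: (u0 (SG_ultra n sc) hh)].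
- move=> Q e0; have e : a n Q <-> c n Q := e0; split => hh.
    have na : ~ a n Q := fun aQ => uN (SG_ultra n sa) aQ hh.
    by apply: (uNC (SG_ultra n sc)) => cQ; apply: na; rewrite e.
  have nc : ~ c n Q := fun cQ => uN (SG_ultra n sc) cQ hh.
  by apply: (uNC (SG_ultra n sa)) => aQ; apply: nc; rewrite -e.
- move=> Q R eQ0 eR0; have eQ : a n Q <-> c n Q := eQ0.
  have eR : a n R <-> c n R := eR0.
  change (a n (Q `|` R) <-> c n (Q `|` R)).
  by rewrite (u_union _ _ (SG_ultra n sa)) (u_union _ _ (SG_ultra n sc)) eQ eR.
Qed.

Definition Bdef (V : set Sr) := exists N0, forall N, (N0 <= N)%N ->
  exists P : set (Hn N), Bgen P /\ forall b, SG b -> (V b <-> b N P).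

Lemma Bdef_ext (V V' : set Sr) : Bdef V -> (forall b, SG b -> (V b <-> V' b)) -> Bdef V'.
Proof.
move=> [N0 h] E; exists N0 => N le; have [P [bP hP]] := h N le.
by exists P; split => // b sb; rewrite -E // hP.
Qed.

Lemma Bdef_T : Bdef setT.
Proof.
exists 0%N => N _; exists setT; split.
  by rewrite -setC0; apply: Bgen_C; apply: Bgen_0.
by move=> b sb; split => // _; apply: (uT (SG_ultra N sb)).
Qed.

Lemma Bdef_C (V : set Sr) : Bdef V -> Bdef (~` V).
Proof.
move=> [N0 h]; exists N0 => N le; have [P [bP hP]] := h N le.
exists (~` P); split; first exact: Bgen_C.
move=> b sb; rewrite /= (hP b sb); split.
  exact: (uNC (SG_ultra N sb)).
by move=> h1 h2; apply: (uN (SG_ultra N sb) h2 h1).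
Qed.

Lemma Bdef_U (V1 V2 : set Sr) : Bdef V1 -> Bdef V2 -> Bdef (V1 `|` V2).
Proof.
move=> [N1 h1] [N2 h2]; exists (maxn N1 N2) => N le.
have [P1 [b1 hP1]] := h1 N (leq_trans (leq_maxl N1 N2) le).
have [P2 [b2 hP2]] := h2 N (leq_trans (leq_maxr N1 N2) le).
exists (P1 `|` P2); split; first exact: Bgen_U.
move=> b sb; rewrite (u_union _ _ (SG_ultra N sb)) -(hP1 b sb) -(hP2 b sb).
by [].
Qed.

Lemma Bdef_0 : Bdef set0.
Proof. by apply: (Bdef_ext (Bdef_C Bdef_T)) => b _; split => // /(_ I). Qed.

Lemma Bdef_I (V1 V2 : set Sr) : Bdef V1 -> Bdef V2 -> Bdef (V1 `&` V2).
Proof.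
move=> d1 d2; apply: (Bdef_ext (Bdef_C (Bdef_U (Bdef_C d1) (Bdef_C d2)))) => b _.
split.
  move=> h; split.
    by case: (pselect (V1 b)) => // n1; exfalso; apply: h; left.
  by case: (pselect (V2 b)) => // n2; exfalso; apply: h; right.
by move=> [v1 v2] [].
Qed.

Lemma Bdef_finI (I : Type) (F : set I) (C : I -> set Sr) : finite_set F ->
  (forall i, Bdef (C i)) -> Bdef [set b | forall i, F i -> C i b].
Proof.
move=> fF hC; move: F fF; apply: finite_ind.
  by apply: (Bdef_ext Bdef_T) => b _; split => // _ i [].
move=> B x _ IH; apply: (Bdef_ext (Bdef_I (hC x) IH)) => b _; split.
  by move=> [cx h] i [->|Bi] //; apply: h.
by move=> h; split; [apply: h; left|move=> i Bi; apply: h; right].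
Qed.

Lemma Bdef_finU (I : Type) (F : set I) (C : I -> set Sr) : finite_set F ->
  (forall i, Bdef (C i)) -> Bdef [set b | exists i, F i /\ C i b].
Proof.
move=> fF hC; move: F fF; apply: finite_ind.
  by apply: (Bdef_ext Bdef_0) => b _; split => [[]|[i [[] _]]].
move=> B x _ IH; apply: (Bdef_ext (Bdef_U (hC x) IH)) => b _; split.
  by case=> [cx|[i [Bi ci]]]; [exists x; split => //; left|exists i; split => //; right].
by move=> [i [[->|Bi] ci]]; [left|right; exists i].
Qed.

Lemma Bdef_closed (V : set Sr) : Bdef V -> isclosed [set b | SG b /\ V b].
Proof.
move=> [N0 h]; have [P [_ hP]] := h N0 (leqnn N0).
refine (closed_ext (basic_closed P) _ _); last by move=> b [].
by move=> b sb; split => -[_ h1]; split => //; [rewrite hP|rewrite -hP].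
Qed.

Lemma Bdef_D (p : Sr) k (Q : set (Hn k)) : M p -> Bdef [set b | b k (D p Q)].
Proof.
move=> Mp; have sp := M_SG Mp; exists k => N kN; exists (inc k N (D p Q)); split.
  have -> : inc k N (D p Q) = D p (inc k N Q).
    by apply/seteqP; split => f /=; rewrite (D_incl _ _ sp kN).
  by apply: Bgen_min; apply: D_minimal.
by move=> b sb; apply: SG_coh.
Qed.

Lemma dir21 : (forall m, @Bprime K A m = setT) ->
  forall a c : Sr, SG a -> SG c -> a <> c ->
  exists phi, retraction M phi /\ phi a <> phi c.
Proof.
move=> h2 a c sa sc nac.
have [m [T0 [aT ncT]]] := SG_neq sa sc nac.
have : @Bprime K A m T0 by rewrite h2.
move=> [n [mn bT]].
have aT' : a n (inc m n T0) by rewrite -(SG_coh _ sa mn).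
have ncT' : ~ c n (inc m n T0) by rewrite -(SG_coh _ sc mn).
have [S [mS nS]] : exists S, minimal_subset S /\ ~ (a n S <-> c n S).
  case: (pselect (exists S : set (Hn n), minimal_subset S /\ ~ (a n S <-> c n S))) => // nS.
  exfalso; apply: ncT'; rewrite -(Bgen_sep sa sc bT) // => S mS.
  by case: (pselect (a n S <-> c n S)) => // ne; exfalso; apply: nS; exists S; split.
have [q [Mq fq]] := exists_fix mS.
have [u [[Mu fu] uu]] : exists u, (M u /\ D u S = S) /\ star u u = u.
  apply: ellis.
  - by move=> x [Mx _]; apply: M_SG.
  - by exists q.
  - apply: (closed_ext (C := M `&` [set u | SG u /\
        forall f, [set q : Sr | SG q /\ (D q S f <-> S f)] u])).
    + exact: closedI M_closed (closed_bigcap (fun f => closed_D S f (S f))).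
    + move=> b sb; split.
        move=> [Mb [_ h]]; split => //; apply/seteqP; split => f; by have [_ e] := h f; rewrite /= e.
      by move=> [Mb e]; split => //; split => // f; split => //; rewrite e.
    + by move=> b [Mb _]; apply: M_SG.
  - move=> x y [Mx ex] [My ey]; split; first exact: (star_M Mx (M_SG My)).
    by apply/seteqP; split => f; rewrite /= (D_star _ _ (M_SG Mx) (M_SG My)) ex ey.
exists (fun b => star u b); split; first exact: (retr_of_idem Mu uu).
move=> e; apply: nS.
have := congr1 (fun b : Sr => b n S) e; rewrite /= /star fu => ->.
by [].
Qed.

Lemma dir12 : (forall a c : Sr, SG a -> SG c -> a <> c ->
  exists phi, retraction M phi /\ phi a <> phi c) ->
  forall m, @Bprime K A m = setT.
Proof.
move=> h1 m; apply/seteqP; split => // T0 _.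
pose U := [set b : Sr | b m T0].
have sep : forall a c, SG a -> SG c -> U a -> ~ U c ->
    exists V, Bdef V /\ V a /\ ~ V c.
  move=> a c sa sc Ua nUc.
  have nac : a <> c by move=> e; apply: nUc; rewrite -e.
  have [phi [rphi nphi]] := h1 a c sa sc nac.
  have [Mp eqs] := retr_star rphi.
  rewrite (eqs a sa) (eqs c sc) in nphi.
  have [k [Q [aQ ncQ]]] := SG_neq (star_SG (M_SG Mp) sa) (star_SG (M_SG Mp) sc) nphi.
  by exists [set b | b k (D (phi (pt id)) Q)]; split; [apply: Bdef_D|split].
have stepA : forall a, SG a -> U a ->
    exists W, Bdef W /\ W a /\ forall b, SG b -> W b -> U b.
  move=> a sa Ua.
  have [Vf hVf] : exists Vf : Sr -> set Sr, forall c, (SG c /\ ~ U c) ->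
      Bdef (Vf c) /\ Vf c a /\ ~ Vf c c.
    have hex : forall c : Sr, exists V : set Sr, (SG c /\ ~ U c) -> Bdef V /\ V a /\ ~ V c.
      move=> c; case: (pselect (SG c /\ ~ U c)) => [[sc nUc]|nc]; last by exists set0.
      by have [V hV] := sep a c sa sc Ua nUc; exists V.
    by have [f hf] := choice hex; exists f.
  pose C := fun c => [set b : Sr | SG b /\ ((SG c /\ ~ U c) -> Vf c b)].
  have cC : forall c, isclosed (C c).
    move=> c; case: (pselect (SG c /\ ~ U c)) => hc.
      apply: (closed_ext (Bdef_closed (proj1 (hVf c hc)))); last by move=> b [].
      move=> b sb; split.
        by move=> [_ h]; split => // _.
      by move=> [_ h]; split => //; apply: h.
    apply: (closed_ext SG_closed); last by move=> b [].
    by move=> b sb; split => // _; split => // /hc.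
  have hyp : forall b, SG b -> [set b | SG b /\ b m (~` T0)] b -> exists c, ~ C c b.
    move=> b sb [_ nT]; exists b => -[_ h].
    have nUb : ~ U b by move=> Ub; apply: (uN (SG_ultra m sb) Ub nT).
    by have [_ [_ nb]] := hVf b (conj sb nUb); apply: nb; apply: h.
  have [F [fF hF]] := compact_fin (basic_closed (n:=m) (~` T0)) cC hyp.
  exists [set b | forall c, F c -> (SG c /\ ~ U c) -> Vf c b]; split; [|split].
  - apply: Bdef_finI => // c.
    case: (pselect (SG c /\ ~ U c)) => hc.
      by apply: (Bdef_ext (proj1 (hVf c hc))) => b _; split => // h; apply: h.
    by apply: (Bdef_ext Bdef_T) => b _; split => // _ /hc.
  - by move=> c _ hc; have [_ [h _]] := hVf c hc.
  - move=> b sb Wb; case: (pselect (U b)) => // nUb; exfalso.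
    have [c [Fc nC]] := hF b sb (conj sb (uNC (SG_ultra m sb) nUb)).
    by apply: nC; split => // hc; apply: Wb.
have [Wf hWf] : exists Wf : Sr -> set Sr, forall a, (SG a /\ U a) ->
    Bdef (Wf a) /\ Wf a a /\ forall b, SG b -> Wf a b -> U b.
  have hex : forall a : Sr, exists W : set Sr, (SG a /\ U a) ->
     Bdef W /\ W a /\ forall b, SG b -> W b -> U b.
    move=> a; case: (pselect (SG a /\ U a)) => [[sa Ua]|na]; last by exists set0.
    by have [W hW] := stepA a sa Ua; exists W.
  by have [f hf] := choice hex; exists f.
pose C := fun a => [set b : Sr | SG b /\ ((SG a /\ U a) -> ~ Wf a b)].
have cC : forall a, isclosed (C a).
  move=> a; case: (pselect (SG a /\ U a)) => ha.
    apply: (closed_ext (Bdef_closed (Bdef_C (proj1 (hWf a ha))))); last by move=> b [].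
    move=> b sb; split.
        by move=> [_ h]; split => // _.
      by move=> [_ h]; split => //; apply: h.
  apply: (closed_ext SG_closed); last by move=> b [].
  by move=> b sb; split => // _; split => // /ha.
have hyp : forall b, SG b -> [set b | SG b /\ b m T0] b -> exists a, ~ C a b.
  move=> b sb [_ Ub]; exists b => -[_ h].
  by have [_ [wb _]] := hWf b (conj sb Ub); apply: h.
have [F [fF hF]] := compact_fin (basic_closed T0) cC hyp.
pose V := [set b | exists a, F a /\ ((SG a /\ U a) /\ Wf a b)].
have bV : Bdef V.
  apply: Bdef_finU => // a.
  case: (pselect (SG a /\ U a)) => ha.
    by apply: (Bdef_ext (proj1 (hWf a ha))) => b _; split => [h|[]//]; split.
  by apply: (Bdef_ext Bdef_0) => b _; split => // -[/ha].
have EV : forall b, SG b -> (V b <-> b m T0).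
  move=> b sb; split.
    by move=> [a [Fa [ha Wab]]]; have [_ [_ h]] := hWf a ha; apply: h.
  move=> Ub; have [a [Fa nC]] := hF b sb (conj sb Ub).
  exists a; split => //.
  case: (pselect (SG a /\ U a)) => ha; last by exfalso; apply: nC; split => // /ha.
  split => //; case: (pselect (Wf a b)) => // nW; exfalso; apply: nC; split => //.
have [N0 hN0] := bV.
set N := maxn N0 m.
have [P [bP hP]] := hN0 N (leq_maxl _ _).
exists N; split; first exact: leq_maxr.
suff -> : inc m N T0 = P by [].
apply/seteqP; split => x hx; have [g [ga gx]] := extend x; have sg := pt_SG ga.
  have key : pt g N P <-> pt g N (inc m N T0).
    by rewrite -(hP _ sg) (EV _ sg); apply: (SG_coh _ sg (leq_maxr N0 m)).
  by move: key; rewrite /pt gx => ->.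
have key : pt g N P <-> pt g N (inc m N T0).
  by rewrite -(hP _ sg) (EV _ sg); apply: (SG_coh _ sg (leq_maxr N0 m)).
by move: key; rewrite /pt gx => <-.
Qed.

End Main.

Theorem mainTheorem17 (K : relstruct) (A : nat -> set (carrier K)) :
  exhaustion A -> ultrahomogeneous K ->
  forall M : set (@Sraw K A), @minimal_subflow K A M ->
  ((forall alpha gamma : @Sraw K A,
      @SG K A alpha -> @SG K A gamma -> alpha <> gamma ->
      exists phi : @Sraw K A -> @Sraw K A,
        @retraction K A M phi /\ phi alpha <> phi gamma)
   <->
   (forall m : nat, @Bprime K A m = setT)).
Proof.
move=> exA uhK M hM; split.
  exact: (dir12 exA uhK hM).
exact: (dir21 exA uhK hM).
Qed.
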